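(* Let $K$ be a real biquadratic field with $\operatorname{sgnrk}(K)\ge 3$, and let $K_i=\mathbb{Q}(\sqrt{D_i})$, $1\le i\le 3$, be its three quadratic subfields, with $D_i>1$ squarefree. Then for each $1\le i\le 3$ there exists a unit $\eta_i\in\mathcal{O}_K^\times$ with $\operatorname{sgn}(\eta_i)=\operatorname{sgn}(\sqrt{D_i})$.
   Context: A real biquadratic field is $K=\mathbb{Q}(\sqrt{D_1},\sqrt{D_2})$ of degree $4$ with $D_1,D_2>1$ squarefree integers. For $\alpha\in K^\times$, $\operatorname{sgn}(\alpha)\in\mathbb{F}_2^4$ records the signs of its four real embeddings ($0$ for positive, $1$ for negative). $\operatorname{sgnrk}(K)$ is the $\mathbb{F}_2$-dimension of the unit signature group $\{\operatorname{sgn}(\eta):\eta\in\mathcal{O}_K^\times\}$. *)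

(* Defs.v *)
From HB Require Import structures.
From mathcomp Require Import all_boot all_order all_algebra all_field.
From Stdlib Require Import ClassicalEpsilon.
Set Implicit Arguments. Unset Strict Implicit. Unset Printing Implicit Defensive.
Import Order.TTheory GRing.Theory Num.Theory.
Local Open Scope ring_scope.

Definition squarefree (n : nat) : Prop := forall d : nat, (d * d %| n)%N -> d = 1%N.

(* elements of K = Q(sqrt D1, sqrt D2) in the basis 1, s1, s2, s1*s2 *)
Definition Kelt := (rat * rat * rat * rat)%type.

(* the four real embeddings of K, indexed by j : 'I_4 ;
   bit 0 of j is the sign flip of sqrt D1, bit 1 of j the flip of sqrt D2;
   j = 0 is the embedding with sqrt D_i |-> the positive root. *)
Definition emb (D1 D2 : nat) (j : 'I_4) (x : Kelt) : algC :=
  let: (a, b, c, d) := x in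
  let e1 : algC := (-1) ^+ odd j in
  let e2 : algC := (-1) ^+ odd j./2 in
  let s1 := sqrtC (D1%:R : algC) in
  let s2 := sqrtC (D2%:R : algC) in
  ratr a + e1 * ratr b * s1 + e2 * ratr c * s2 + e1 * e2 * ratr d * (s1 * s2).

Definition sgn (D1 D2 : nat) (x : Kelt) : 'rV['F_2]_4 :=
  \row_(j < 4) (if emb D1 D2 j x < 0 then 1 else 0).

Definition is_OK_unit (D1 D2 : nat) (x : Kelt) : Prop :=
  let v := emb D1 D2 0 x in
  [/\ v != 0, v \in Aint & v^-1 \in Aint].

Definition is_unit_sgn (D1 D2 : nat) (s : 'rV['F_2]_4) : bool :=
  if excluded_middle_informative
       (exists x : Kelt, is_OK_unit D1 D2 x /\ sgn D1 D2 x = s)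
  then true else false.

Definition unit_sgn_group (D1 D2 : nat) : {set 'rV['F_2]_4} :=
  [set s | is_unit_sgn D1 D2 s].

Definition sgnrk (D1 D2 : nat) : nat :=
  \dim <<enum (unit_sgn_group D1 D2)>>%VS.

(* Main.v *)
Require Import Defs.
From mathcomp Require Import all_boot all_order all_algebra all_field.
From mathcomp Require Import ring zify.
From Stdlib Require Import Classical ClassicalEpsilon.
Import Order.TTheory GRing.Theory Num.Theory.
Local Open Scope ring_scope.

Lemma sqf1 (n : nat) : squarefree n -> forall d, (d * d %| n)%N -> d = 1%N.
Proof. by []. Qed.

Lemma sqf_eq (D1 D2 : nat) : squarefree D1 -> squarefree D2 ->
  forall q : rat, q ^+ 2 * D2%:R = D1%:R -> D1 = D2.
Proof.
move=> s1 s2 q Hq.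
have Hd : (denq q)%:~R != 0 :> rat by rewrite intr_eq0 denq_neq0.
have E : (numq q) ^+ 2 * D2%:R = D1%:R * (denq q) ^+ 2 :> int.
  apply: (@intr_inj rat); rewrite !rmorphM /= !rmorph_nat -Hq.
  rewrite -[in q ^+ 2](divq_num_den q); field; exact: Hd.
have cop := coprime_num_den q.
pose n := `|numq q|%N; pose m := `|denq q|%N.
have En : (n * n * D2 = D1 * (m * m))%N.
  have := congr1 absz E; rewrite !abszM ?abszX ?natz /=; by [].
have hm : m = 1%N.
  apply: s2; have : (m * m %| n * n * D2)%N by rewrite En dvdn_mull.
  have cmn : coprime (m * m) (n * n).
    by rewrite coprimeMl !coprimeMr coprime_sym /n /m cop.
  by rewrite Gauss_dvdr.
have hn : n = 1%N.
  apply: s1; move: En; rewrite hm !muln1 => <-; exact: dvdn_mulr.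
by move: En; rewrite hm hn !muln1 !mul1n => ->.
Qed.

Lemma sqf_one : squarefree 1.
Proof. by move=> d; rewrite dvdn1 muln_eq1 => /andP[/eqP]. Qed.

Lemma nonsq (D : nat) : squarefree D -> (1 < D)%N -> forall q : rat, q ^+ 2 <> D%:R.
Proof.
move=> sD D1 q Hq; have := @sqf_eq D 1 sD sqf_one q; rewrite mulr1 => /(_ Hq) E.
by rewrite E in D1.
Qed.

Definition j0 : 'I_4 := @Ordinal 4 0 isT.

Lemma sqrt_sq (D : nat) : sqrtC (D%:R : algC) ^+ 2 = D%:R.
Proof. exact: sqrtCK. Qed.

Lemma irr2 (D : nat) : squarefree D -> (1 < D)%N ->
  forall p q : rat, ratr p + ratr q * sqrtC (D%:R : algC) = 0 -> p = 0 /\ q = 0.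
Proof.
move=> sD D1 p q H.
have [q0|qn0] := eqVneq q 0.
  by move: H; rewrite q0 rmorph0 mul0r addr0 => /eqP; rewrite fmorph_eq0 => /eqP.
exfalso; apply: (nonsq D sD D1 (- p / q)).
apply: (fmorph_inj (@ratr algC)); rewrite rmorphXn /= ratr_nat -(sqrt_sq D).
have qC : ratr q != 0 :> algC by rewrite fmorph_eq0.
have -> : sqrtC (D%:R : algC) = - ratr p / ratr q.
  apply: (mulfI qC); move/eqP: H; rewrite addrC addr_eq0 => /eqP ->.
  by rewrite mulrCA divff // mulr1.
by rewrite fmorph_div rmorphN.
Qed.

Lemma notin (D1 D2 : nat) : squarefree D1 -> squarefree D2 -> (1 < D1)%N -> (1 < D2)%N ->
  D1 <> D2 -> forall p q : rat,
  sqrtC (D1%:R : algC) <> ratr p + ratr q * sqrtC (D2%:R : algC).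
Proof.
move=> sf1 sf2 g1 g2 neq p q H.
have h1 := sqrt_sq D1; have h2 := sqrt_sq D2.
set s1 := sqrtC (D1%:R : algC) in h1 H *; set s2 := sqrtC (D2%:R : algC) in h2 H *.
have E : ratr (p ^+ 2 + q ^+ 2 * D2%:R - D1%:R) + ratr (2 * p * q) * s2 = 0.
  rewrite !(rmorphD, rmorphM, rmorphN, rmorphXn) /= ?ratr_nat -h1 -h2 H; ring.
have [E1 E2] := irr2 D2 sf2 g2 _ _ E.
have [p0|q0] : p = 0 \/ q = 0.
  move/eqP: E2; rewrite !mulf_eq0 => /orP[/orP[//|/eqP ->]|/eqP ->]; by [left|right].
  apply: neq; apply: (sqf_eq D1 D2 sf1 sf2 q).
  by apply/eqP; rewrite -subr_eq0 -E1 p0 expr0n /= add0r.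
apply: (nonsq D1 sf1 g1 p); apply/eqP; rewrite -subr_eq0 -E1 q0 expr0n /= mul0r addr0 //.
Qed.

Lemma indep (D1 D2 : nat) : squarefree D1 -> squarefree D2 -> (1 < D1)%N -> (1 < D2)%N ->
  D1 <> D2 -> forall a b c d : rat,
  ratr a + ratr b * sqrtC (D1%:R : algC) + ratr c * sqrtC (D2%:R : algC)
   + ratr d * (sqrtC (D1%:R : algC) * sqrtC (D2%:R : algC)) = 0 ->
  [/\ a = 0, b = 0, c = 0 & d = 0].
Proof.
move=> sf1 sf2 g1 g2 neq a b c d H.
have h2 := sqrt_sq D2.
set s1 := sqrtC (D1%:R : algC) in H *; set s2 := sqrtC (D2%:R : algC) in h2 H *.
have [bd0|bdn0] := boolP ((b == 0) && (d == 0)).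
  case/andP: bd0 => /eqP b0 /eqP d0.
  move: H; rewrite b0 d0 !rmorph0 !mul0r addr0 addr0 => H.
  by have [-> ->] := irr2 D2 sf2 g2 a c H.
exfalso.
pose N := b ^+ 2 - D2%:R * d ^+ 2.
have Nn0 : N != 0.
  apply/negP => /eqP N0.
  have [d0|dn0] := eqVneq d 0.
    move: N0 bdn0; rewrite /N d0 expr0n /= mulr0 subr0 => /eqP.
    by rewrite expf_eq0 /= => ->; rewrite eqxx.
  apply: (nonsq D2 sf2 g2 (b / d)).
  have Eb : b ^+ 2 = D2%:R * d ^+ 2 by apply/eqP; rewrite -subr_eq0 -N0.
  by rewrite expr_div_n Eb mulfK ?expf_neq0.
have NC : ratr N != 0 :> algC by rewrite fmorph_eq0.
have H' : ratr N * s1 + (ratr (a * b - D2%:R * c * d) + ratr (b * c - a * d) * s2) = 0.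
  have key : ratr N * s1 + (ratr (a * b - D2%:R * c * d) + ratr (b * c - a * d) * s2)
     = (ratr b - ratr d * s2) * (ratr a + ratr b * s1 + ratr c * s2 + ratr d * (s1 * s2))
       + (ratr c * ratr d + s1 * ratr d ^+ 2) * (s2 ^+ 2 - D2%:R).
    rewrite /N !(rmorphD, rmorphM, rmorphN, rmorphXn, rmorphB) /= ?ratr_nat; ring.
  by rewrite key H h2 subrr !mulr0 addr0.
apply: (notin D1 D2 sf1 sf2 g1 g2 neq (- (a * b - D2%:R * c * d) / N) (- (b * c - a * d) / N)).
apply: (mulfI NC); move/eqP: H'; rewrite addr_eq0 => /eqP ->.
rewrite !(fmorph_div, rmorphN) /= -/s2.
move: (ratr N) NC (ratr (a * b - D2%:R * c * d)) (ratr (b * c - a * d)) => n NC u v.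
by field.
Qed.

Definition j1 : 'I_4 := @Ordinal 4 1 isT.
Definition j2 : 'I_4 := @Ordinal 4 2 isT.
Definition j3 : 'I_4 := @Ordinal 4 3 isT.

Lemma ord4P (P : 'I_4 -> Prop) : P j0 -> P j1 -> P j2 -> P j3 -> forall j, P j.
Proof.
move=> H0 H1 H2 H3 [[|[|[|[|n]]]] Hn] //.
- by rewrite (_ : Ordinal Hn = j0) //; apply: val_inj.
- by rewrite (_ : Ordinal Hn = j1) //; apply: val_inj.
- by rewrite (_ : Ordinal Hn = j2) //; apply: val_inj.
- by rewrite (_ : Ordinal Hn = j3) //; apply: val_inj.
Qed.

Lemma zero_j0 : (0 : 'I_4) = j0. Proof. exact: val_inj. Qed.

Definition good (D1 D2 : nat) : Prop :=
  [/\ squarefree D1, squarefree D2, (1 < D1)%N, (1 < D2)%N & D1 <> D2].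

Definition mulK (D1 D2 : nat) (x y : Kelt) : Kelt :=
  let: (a, b, c, d) := x in let: (a', b', c', d') := y in
  (a * a' + D1%:R * b * b' + D2%:R * c * c' + D1%:R * D2%:R * d * d',
   a * b' + b * a' + D2%:R * (c * d' + d * c'),
   a * c' + c * a' + D1%:R * (b * d' + d * b'),
   a * d' + d * a' + b * c' + c * b').
Definition addK (x y : Kelt) : Kelt :=
  let: (a, b, c, d) := x in let: (a', b', c', d') := y in (a + a', b + b', c + c', d + d').
Definition subK (x y : Kelt) : Kelt :=
  let: (a, b, c, d) := x in let: (a', b', c', d') := y in (a - a', b - b', c - c', d - d').
Definition scaleK (r : rat) (x : Kelt) : Kelt :=
  let: (a, b, c, d) := x in (r * a, r * b, r * c, r * d).
Definition cstK (r : rat) : Kelt := (r, 0, 0, 0).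
Definition c1 (x : Kelt) : Kelt := let: (a, b, c, d) := x in (a, - b, c, - d).
Definition c2 (x : Kelt) : Kelt := let: (a, b, c, d) := x in (a, b, - c, - d).
Definition c3 (x : Kelt) : Kelt := let: (a, b, c, d) := x in (a, - b, - c, d).

Ltac embsimp := rewrite /emb /= ?(rmorphD, rmorphM, rmorphN, rmorphB, rmorph0, rmorph1) /= ?ratr_nat.

Lemma embM D1 D2 j x y : emb D1 D2 j (mulK D1 D2 x y) = emb D1 D2 j x * emb D1 D2 j y.
Proof.
case: x => [[[a b] c] d]; case: y => [[[a' b'] c'] d'].
have h1 := sqrt_sq D1; have h2 := sqrt_sq D2.
rewrite /emb /=; move: (sqrtC _) (sqrtC _) h1 h2 => s1 s2 h1 h2.
rewrite !(rmorphD, rmorphM) /= ?ratr_nat -h1 -h2.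
elim/ord4P: j; rewrite /= ?expr0 ?expr1; ring.
Qed.

Lemma embD D1 D2 j x y : emb D1 D2 j (addK x y) = emb D1 D2 j x + emb D1 D2 j y.
Proof.
case: x => [[[a b] c] d]; case: y => [[[a' b'] c'] d'].
by rewrite /emb /= !rmorphD /=; ring.
Qed.

Lemma embB D1 D2 j x y : emb D1 D2 j (subK x y) = emb D1 D2 j x - emb D1 D2 j y.
Proof.
case: x => [[[a b] c] d]; case: y => [[[a' b'] c'] d'].
by rewrite /emb /= !rmorphB /=; ring.
Qed.

Lemma embZ D1 D2 j r x : emb D1 D2 j (scaleK r x) = ratr r * emb D1 D2 j x.
Proof.
case: x => [[[a b] c] d].
by rewrite /emb /= !rmorphM /=; ring.
Qed.

Lemma embC D1 D2 j r : emb D1 D2 j (cstK r) = ratr r.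
Proof. by rewrite /emb /= !rmorph0 !(mulr0, mul0r) !addr0. Qed.

Lemma emb_c1 D1 D2 x :
  [/\ emb D1 D2 j0 (c1 x) = emb D1 D2 j1 x, emb D1 D2 j1 (c1 x) = emb D1 D2 j0 x,
      emb D1 D2 j2 (c1 x) = emb D1 D2 j3 x & emb D1 D2 j3 (c1 x) = emb D1 D2 j2 x].
Proof.
case: x => [[[a b] c] d]; rewrite /emb /= !rmorphN /= ?expr0 ?expr1.
by split; ring.
Qed.

Lemma emb_c2 D1 D2 x :
  [/\ emb D1 D2 j0 (c2 x) = emb D1 D2 j2 x, emb D1 D2 j1 (c2 x) = emb D1 D2 j3 x,
      emb D1 D2 j2 (c2 x) = emb D1 D2 j0 x & emb D1 D2 j3 (c2 x) = emb D1 D2 j1 x].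
Proof.
case: x => [[[a b] c] d]; rewrite /emb /= !rmorphN /= ?expr0 ?expr1.
by split; ring.
Qed.

Lemma emb_c3 D1 D2 x :
  [/\ emb D1 D2 j0 (c3 x) = emb D1 D2 j3 x, emb D1 D2 j1 (c3 x) = emb D1 D2 j2 x,
      emb D1 D2 j2 (c3 x) = emb D1 D2 j1 x & emb D1 D2 j3 (c3 x) = emb D1 D2 j0 x].
Proof.
case: x => [[[a b] c] d]; rewrite /emb /= !rmorphN /= ?expr0 ?expr1.
by split; ring.
Qed.

Lemma emb_inj0 D1 D2 x : good D1 D2 -> emb D1 D2 j0 x = 0 -> x = (0, 0, 0, 0).
Proof.
case=> sf1 sf2 g1 g2 neq; case: x => [[[a b] c] d].
rewrite /emb /= expr0 !mul1r => H.
by have [-> -> -> ->] := indep D1 D2 sf1 sf2 g1 g2 neq a b c d H.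
Qed.

Lemma emb_inj D1 D2 x y : good D1 D2 -> emb D1 D2 j0 x = emb D1 D2 j0 y -> x = y.
Proof.
move=> G H; have := emb_inj0 D1 D2 (subK x y) G; rewrite embB H subrr => /(_ erefl).
case: x {H} => [[[a b] c] d]; case: y => [[[a' b'] c'] d'] /= [].
by move=> /eqP; rewrite subr_eq0 => /eqP -> /eqP; rewrite subr_eq0 => /eqP ->
  /eqP; rewrite subr_eq0 => /eqP -> /eqP; rewrite subr_eq0 => /eqP ->.
Qed.

Lemma emb_zero D1 D2 j : emb D1 D2 j (0, 0, 0, 0) = 0.
Proof. by rewrite /emb /= !rmorph0 !(mulr0, mul0r) !addr0. Qed.

Lemma emb_neq0 D1 D2 x j : good D1 D2 -> emb D1 D2 j0 x != 0 -> emb D1 D2 j x != 0.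
Proof.
move=> G nz; elim/ord4P: j => //.
- have [<- _ _ _] := emb_c1 D1 D2 x; apply/eqP => /(emb_inj0 D1 D2 _ G).
  by case: x nz => [[[a b] c] d] nz /= [a0 /eqP]; rewrite oppr_eq0 => /eqP b0 c0 /eqP;
     rewrite oppr_eq0 => /eqP d0; move: nz; rewrite a0 b0 c0 d0 emb_zero eqxx.
- have [<- _ _ _] := emb_c2 D1 D2 x; apply/eqP => /(emb_inj0 D1 D2 _ G).
  by case: x nz => [[[a b] c] d] nz /= [a0 b0 /eqP]; rewrite oppr_eq0 => /eqP c0 /eqP;
     rewrite oppr_eq0 => /eqP d0; move: nz; rewrite a0 b0 c0 d0 emb_zero eqxx.
- have [<- _ _ _] := emb_c3 D1 D2 x; apply/eqP => /(emb_inj0 D1 D2 _ G).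
  by case: x nz => [[[a b] c] d] nz /= [a0 /eqP]; rewrite oppr_eq0 => /eqP b0 /eqP;
     rewrite oppr_eq0 => /eqP c0 d0; move: nz; rewrite a0 b0 c0 d0 emb_zero eqxx.
Qed.

Lemma polyK D1 D2 x (q : {poly rat}) :
  exists y, forall j, (map_poly ratr q).[emb D1 D2 j x] = emb D1 D2 j y.
Proof.
elim/poly_ind: q => [|q c [y Hy]].
  by exists (0, 0, 0, 0) => j; rewrite rmorph0 horner0 emb_zero.
exists (addK (mulK D1 D2 y x) (cstK c)) => j.
by rewrite rmorphD rmorphM /= map_polyX map_polyC hornerMXaddC embD embM embC Hy.
Qed.

Lemma transfer D1 D2 x j : good D1 D2 ->
  emb D1 D2 j0 x \in Aint -> emb D1 D2 j x \in Aint.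
Proof.
move=> G Ax.
have [p [Dm mon] _] := minCpolyP (emb D1 D2 j0 x).
have r0 : root (map_poly ratr p) (emb D1 D2 j0 x) by rewrite -Dm root_minCpoly.
have [y Hy] := polyK D1 D2 x p.
have y0 : y = (0, 0, 0, 0) by apply: (emb_inj0 D1 D2 y G); rewrite -Hy; exact/eqP.
apply: (root_monic_Aint (p := minCpoly (emb D1 D2 j0 x))).
- by rewrite Dm /root Hy y0 emb_zero.
- exact: minCpoly_monic.
- exact: Ax.
Qed.

Lemma norm_form D1 D2 x :
  let z := mulK D1 D2 x (mulK D1 D2 (c1 x) (mulK D1 D2 (c2 x) (c3 x))) in
  z = cstK z.1.1.1.
Proof.
move=> z.
have : [/\ z.1.1.2 = 0, z.1.2 = 0 & z.2 = 0].
  by rewrite /z; case: x {z} => [[[a b] c] d] /=; split; ring.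
by case: z => [[[a b] c] d] /= [-> -> ->].
Qed.

Lemma inv_exists D1 D2 x : good D1 D2 -> emb D1 D2 j0 x != 0 ->
  exists x', forall j, emb D1 D2 j x * emb D1 D2 j x' = 1.
Proof.
move=> G nz.
set y := mulK D1 D2 (c1 x) (mulK D1 D2 (c2 x) (c3 x)).
have Hz := norm_form D1 D2 x; rewrite -/y in Hz.
set N := (mulK D1 D2 x y).1.1.1 in Hz.
have Ej : forall j, emb D1 D2 j x * emb D1 D2 j y = ratr N.
  by move=> j; rewrite -embM Hz embC.
have Nn0 : ratr N != 0 :> algC.
  rewrite -(Ej j0) /y !embM.
  have [-> _ _ _] := emb_c1 D1 D2 x; have [-> _ _ _] := emb_c2 D1 D2 x.
  have [-> _ _ _] := emb_c3 D1 D2 x.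
  by rewrite !mulf_neq0 // emb_neq0.
exists (scaleK N^-1 y) => j.
by rewrite embZ mulrCA Ej fmorphV mulVf.
Qed.

Lemma unitM D1 D2 x y : is_OK_unit D1 D2 x -> is_OK_unit D1 D2 y ->
  is_OK_unit D1 D2 (mulK D1 D2 x y).
Proof.
rewrite /is_OK_unit embM => -[nx Ax Ax'] [ny Ay Ay'].
by split; rewrite ?mulf_neq0 ?invfM ?rpredM.
Qed.

Lemma unit_conj D1 D2 x j : good D1 D2 -> is_OK_unit D1 D2 x ->
  [/\ emb D1 D2 j x != 0, emb D1 D2 j x \in Aint & (emb D1 D2 j x)^-1 \in Aint].
Proof.
rewrite /is_OK_unit zero_j0 => G [nx Ax Ax'].
have [x' Hx'] := inv_exists D1 D2 x G nx.
have Inv : forall k, (emb D1 D2 k x)^-1 = emb D1 D2 k x'.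
  move=> k; rewrite -[LHS]mulr1 -(Hx' k) mulKf //; exact: emb_neq0.
split; first exact: emb_neq0.
- exact: transfer.
- by rewrite Inv; apply: transfer => //; rewrite -Inv.
Qed.

Lemma unit_c1 D1 D2 x : good D1 D2 -> is_OK_unit D1 D2 x -> is_OK_unit D1 D2 (c1 x).
Proof.
move=> G U; rewrite /is_OK_unit zero_j0; have [-> _ _ _] := emb_c1 D1 D2 x.
exact: unit_conj.
Qed.
Lemma unit_c2 D1 D2 x : good D1 D2 -> is_OK_unit D1 D2 x -> is_OK_unit D1 D2 (c2 x).
Proof.
move=> G U; rewrite /is_OK_unit zero_j0; have [-> _ _ _] := emb_c2 D1 D2 x.
exact: unit_conj.
Qed.
Lemma unit_c3 D1 D2 x : good D1 D2 -> is_OK_unit D1 D2 x -> is_OK_unit D1 D2 (c3 x).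
Proof.
move=> G U; rewrite /is_OK_unit zero_j0; have [-> _ _ _] := emb_c3 D1 D2 x.
exact: unit_conj.
Qed.

Lemma unit_m1 D1 D2 : is_OK_unit D1 D2 (cstK (-1)).
Proof.
rewrite /is_OK_unit embC rmorphN1 invrN1; split; rewrite ?oppr_eq0 ?oner_eq0 //;
  by rewrite rpredN Aint1.
Qed.

Lemma emb_real D1 D2 j x : emb D1 D2 j x \is Num.real.
Proof.
case: x => [[[a b] c] d]; rewrite /emb /=.
have r1 : sqrtC (D1%:R : algC) \is Num.real by apply: sqrtC_real; rewrite ler0n.
have r2 : sqrtC (D2%:R : algC) \is Num.real by apply: sqrtC_real; rewrite ler0n.
move: (sqrtC (D1%:R : algC)) (sqrtC (D2%:R : algC)) r1 r2 => s1 s2 r1 r2.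
have rm : forall n, ((-1 : algC) ^+ n) \is Num.real by move=> n; rewrite rpredX // rpredN rpred1.
have rq : forall q : rat, (ratr q : algC) \is Num.real by move=> q; apply: Creal_Crat; apply: Crat_rat.
by rewrite !(rq, rm, r1, r2, rpredD, rpredM).
Qed.

Lemma sgn_mul (u v : algC) : u \is Num.real -> v \is Num.real -> u != 0 -> v != 0 ->
  (u * v < 0) = (u < 0) (+) (v < 0).
Proof.
move=> ru rv nu nv.
case: (real_ltgt0P ru) => [hu|hu|/eqP]; last by rewrite (negbTE nu).
  by rewrite pmulr_rlt0 //; case: (v < 0).
rewrite nmulr_rlt0 //.
by case: (real_ltgt0P rv) => [hv|hv|/eqP]; last by rewrite (negbTE nv).
Qed.

Definition B4 := (bool * bool * bool * bool)%type.
Definition xorB (s t : B4) : B4 :=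
  let: (a, b, c, d) := s in let: (a', b', c', d') := t in (a (+) a', b (+) b', c (+) c', d (+) d').
Definition sh1 (s : B4) : B4 := let: (a, b, c, d) := s in (b, a, d, c).
Definition sh2 (s : B4) : B4 := let: (a, b, c, d) := s in (c, d, a, b).
Definition sh3 (s : B4) : B4 := let: (a, b, c, d) := s in (d, c, b, a).
Definition T4 : B4 := (true, true, true, true).
Definition F4 : B4 := (false, false, false, false).
Definition oddB (s : B4) : bool := let: (a, b, c, d) := s in a (+) b (+) c (+) d.
Definition v1 : B4 := (false, true, false, true).
Definition v2 : B4 := (false, false, true, true).
Definition v3 : B4 := (false, true, true, false).

Lemma fact1 (s v : B4) : v \in [:: v1; v2; v3] -> oddB s ->
  v \in [:: xorB s (sh1 s); xorB s (sh2 s); xorB s (sh3 s);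
         xorB (xorB s (sh1 s)) T4; xorB (xorB s (sh2 s)) T4; xorB (xorB s (sh3 s)) T4].
Proof.
by rewrite !inE; case: s => [[[[] []] []] []] /or3P[] /eqP ->.
Qed.

Lemma fact2 (q s v : B4) : v \in [:: v1; v2; v3] -> ~~ oddB q -> ~~ oddB s ->
  q \notin [:: F4; T4] ->
  (s \in [:: F4; q; T4; xorB q T4]) ||
  (v \in [:: q; xorB q T4; s; xorB s T4; xorB q s; xorB (xorB q s) T4]).
Proof.
rewrite !inE => /or3P[] /eqP ->;
by case: q => [[[[] []] []] []]; case: s => [[[[] []] []] []].
Qed.

Lemma comb (P : B4 -> Prop) (v : B4) : v \in [:: v1; v2; v3] ->
  (forall s t, P s -> P t -> P (xorB s t)) ->
  (forall s, P s -> P (sh1 s)) -> (forall s, P s -> P (sh2 s)) -> (forall s, P s -> P (sh3 s)) ->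
  P T4 -> ~ P v ->
  exists q, forall s, P s -> s \in [:: F4; q; T4; xorB q T4].
Proof.
move=> vin PX P1 P2 P3 PT nPv.
have inL : forall L : seq B4, (forall u, u \in L -> P u) -> v \in L -> False.
  by move=> L HL /HL.
have even : forall s, P s -> ~~ oddB s.
  move=> s Ps; apply/negP => os; apply: (inL _ _ (fact1 s v vin os)).
  move=> u; rewrite !inE => /orP[/eqP->|/orP[/eqP->|/orP[/eqP->|/orP[/eqP->|/orP[/eqP->|/eqP->]]]]];
  by auto.
case: (classic (exists q, P q /\ q \notin [:: F4; T4])) => [[q [Pq nq]]|none].
  exists q => s Ps.
  have := fact2 q s v vin (even q Pq) (even s Ps) nq; case/orP => // H.
  exfalso; apply: (inL _ _ H).
  move=> u; rewrite !inE => /orP[/eqP->|/orP[/eqP->|/orP[/eqP->|/orP[/eqP->|/orP[/eqP->|/eqP->]]]]];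
  by auto.
exists T4 => s Ps; case: (boolP (s \in [:: F4; T4])).
  by rewrite !inE => /orP[/eqP->|/eqP->].
by move=> ns; exfalso; apply: none; exists s.
Qed.

Definition sg D1 D2 (x : Kelt) : B4 :=
  (emb D1 D2 j0 x < 0, emb D1 D2 j1 x < 0, emb D1 D2 j2 x < 0, emb D1 D2 j3 x < 0).

Lemma signs_pos (u : algC) : 0 < u -> (u < 0) = false /\ (- u < 0) = true.
Proof. by move=> h; rewrite oppr_lt0 h lt_gtF. Qed.

Lemma w_sign D1 D2 D w : good D1 D2 -> (1 < D)%N -> squarefree D ->
  emb D1 D2 0 w = sqrtC (D%:R : algC) -> sg D1 D2 w \in [:: v1; v2; v3].
Proof.
move=> G gD sD; rewrite zero_j0 => Hw.
have Dpos : 0 < sqrtC (D%:R : algC) by rewrite sqrtC_gt0 ltr0n; case: (D) gD.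
have Hw2 : mulK D1 D2 w w = cstK D%:R.
  by apply: (emb_inj D1 D2 _ _ G); rewrite embM embC Hw -expr2 sqrt_sq ratr_nat.
have [sf1 sf2 g1 g2 neq] := G.
case: w Hw Hw2 => [[[a b] c] d] Hw /= [E1 E2 E3 E4].
have a0 : a = 0.
  apply/eqP; apply/negP => /negP an0.
  have Eb : 2 * (b * (a ^+ 2 - D1%:R * D2%:R * d ^+ 2)) = 0.
    have -> : 2 * (b * (a ^+ 2 - D1%:R * D2%:R * d ^+ 2)) =
       a * (a * b + b * a + D2%:R * (c * d + d * c))
       - D2%:R * d * (a * c + c * a + D1%:R * (b * d + d * b)) by ring.
    by rewrite E2 E3; ring.
  have b0 : b = 0.
    apply/eqP; apply/negP => /negP bn0; move/eqP: Eb; rewrite mulf_eq0 pnatr_eq0 /=.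
    rewrite mulf_eq0 (negbTE bn0) /= subr_eq0 => /eqP Ea.
    have dn0 : d != 0.
      by apply/negP => /eqP d0; move: Ea; rewrite d0 expr0n /= mulr0 => /eqP; rewrite expf_eq0 /= (negbTE an0).
    apply: neq; apply: (sqf_eq D1 D2 sf1 sf2 (a / (d * D2%:R))).
    have D2n0 : D2%:R != 0 :> rat by rewrite pnatr_eq0; case: (D2) g2.
    rewrite expr_div_n Ea; field; by rewrite D2n0 dn0.
  have c0 : c = 0.
    have h : a * (2 * c) = a * c + c * a + D1%:R * (b * d + d * b) by rewrite b0; ring.
    move: h; rewrite E3 => /eqP; rewrite !mulf_eq0 (negbTE an0) pnatr_eq0 /=.
    by move=> /eqP.
  have d0 : d = 0.
    have h : a * (2 * d) = a * d + d * a + b * c + c * b by rewrite b0 c0; ring.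
    move: h; rewrite E4 => /eqP; rewrite !mulf_eq0 (negbTE an0) pnatr_eq0 /=.
    by move=> /eqP.
  apply: (nonsq D sD gD a); rewrite -E1 b0 c0 d0; ring.
move: Hw E1 E2 E3 E4; rewrite a0 => Hw E1 E2 E3 E4.
have D1n0 : D1%:R != 0 :> rat by rewrite pnatr_eq0; case: (D1) g1.
have D2n0 : D2%:R != 0 :> rat by rewrite pnatr_eq0; case: (D2) g2.
have cd0 : (c == 0) || (d == 0).
  have h : 2 * D2%:R * (c * d) = 0 * b + b * 0 + D2%:R * (c * d + d * c) by ring.
  by move: h; rewrite E2 => /eqP; rewrite !mulf_eq0 (negbTE D2n0) pnatr_eq0.
have bd0 : (b == 0) || (d == 0).
  have h : 2 * D1%:R * (b * d) = 0 * c + c * 0 + D1%:R * (b * d + d * b) by ring.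
  by move: h; rewrite E3 => /eqP; rewrite !mulf_eq0 (negbTE D1n0) pnatr_eq0.
have bc0 : (b == 0) || (c == 0).
  have h : 2 * (b * c) = 0 * d + d * 0 + b * c + c * b by ring.
  by move: h; rewrite E4 => /eqP; rewrite !mulf_eq0 pnatr_eq0.
have [b0|bn0] := eqVneq b 0; have [c0|cn0] := eqVneq c 0; have [d0|dn0] := eqVneq d 0;
  move: cd0 bd0 bc0 Hw; rewrite ?b0 ?c0 ?d0 ?eqxx ?(negbTE bn0) ?(negbTE cn0) ?(negbTE dn0) //= => _ _ _ Hw.
- move: Hw Dpos; rewrite ?expr0 !rmorph0 !(mulr0, mul0r, addr0) => <-; by rewrite ltxx.
- move: Hw; rewrite /sg /emb /= ?rmorph0 ?(mulr0, mul0r, addr0, add0r) ?(expr0, expr1, mul1r, mulN1r, mulNr, opprK) => Hw.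
  rewrite -Hw in Dpos; have [-> ->] := signs_pos _ Dpos; by rewrite !inE eqxx ?orbT.
- move: Hw; rewrite /sg /emb /= ?rmorph0 ?(mulr0, mul0r, addr0, add0r) ?(expr0, expr1, mul1r, mulN1r, mulNr, opprK) => Hw.
  rewrite -Hw in Dpos; have [-> ->] := signs_pos _ Dpos; by rewrite !inE eqxx ?orbT.
- move: Hw; rewrite /sg /emb /= ?rmorph0 ?(mulr0, mul0r, addr0, add0r) ?(expr0, expr1, mul1r, mulN1r, mulNr, opprK) => Hw.
  rewrite -Hw in Dpos; have [-> ->] := signs_pos _ Dpos; by rewrite !inE eqxx ?orbT.
Qed.

Definition Pu D1 D2 (s : B4) : Prop := exists x, is_OK_unit D1 D2 x /\ sg D1 D2 x = s.

Lemma sg_mul D1 D2 x y : good D1 D2 -> is_OK_unit D1 D2 x -> is_OK_unit D1 D2 y ->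
  sg D1 D2 (mulK D1 D2 x y) = xorB (sg D1 D2 x) (sg D1 D2 y).
Proof.
move=> G Ux Uy; rewrite /sg /xorB !embM.
have nx := fun j => (let: And3 h _ _ := unit_conj D1 D2 x j G Ux in h).
have ny := fun j => (let: And3 h _ _ := unit_conj D1 D2 y j G Uy in h).
by rewrite !sgn_mul ?emb_real ?nx ?ny.
Qed.

Lemma PuX D1 D2 s t : good D1 D2 -> Pu D1 D2 s -> Pu D1 D2 t -> Pu D1 D2 (xorB s t).
Proof.
move=> G [x [Ux <-]] [y [Uy <-]]; exists (mulK D1 D2 x y); split.
  exact: unitM.
exact: sg_mul.
Qed.

Lemma xorBK s t : xorB s (xorB s t) = t.
Proof. by case: s => [[[[] []] []] []]; case: t => [[[[] []] []] []]. Qed.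

Lemma Pu1 D1 D2 s : good D1 D2 -> Pu D1 D2 s -> Pu D1 D2 (sh1 s).
Proof.
move=> G Ps; rewrite -(xorBK s (sh1 s)); apply: PuX => //.
have [x [Ux Hx]] := Ps; apply: PuX => //; exists (c1 x); split; first exact: unit_c1.
by rewrite -Hx /sg; have [-> -> -> ->] := emb_c1 D1 D2 x.
Qed.
Lemma Pu2 D1 D2 s : good D1 D2 -> Pu D1 D2 s -> Pu D1 D2 (sh2 s).
Proof.
move=> G Ps; rewrite -(xorBK s (sh2 s)); apply: PuX => //.
have [x [Ux Hx]] := Ps; apply: PuX => //; exists (c2 x); split; first exact: unit_c2.
by rewrite -Hx /sg; have [-> -> -> ->] := emb_c2 D1 D2 x.
Qed.
Lemma Pu3 D1 D2 s : good D1 D2 -> Pu D1 D2 s -> Pu D1 D2 (sh3 s).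
Proof.
move=> G Ps; rewrite -(xorBK s (sh3 s)); apply: PuX => //.
have [x [Ux Hx]] := Ps; apply: PuX => //; exists (c3 x); split; first exact: unit_c3.
by rewrite -Hx /sg; have [-> -> -> ->] := emb_c3 D1 D2 x.
Qed.

Lemma PuT D1 D2 : Pu D1 D2 T4.
Proof.
exists (cstK (-1)); split; first exact: unit_m1.
by rewrite /sg !embC rmorphN1 ltrN10.
Qed.

Definition rowT (s : B4) : 'rV['F_2]_4 :=
  \row_(j < 4) (if nth false [:: s.1.1.1; s.1.1.2; s.1.2; s.2] j then 1 else 0).

Lemma sgn_rowT D1 D2 x : sgn D1 D2 x = rowT (sg D1 D2 x).
Proof. apply/rowP; elim/ord4P; rewrite !mxE /=. all: by []. Qed.

Lemma rowT_xor s t : rowT (xorB s t) = rowT s + rowT t.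
Proof.
have e : forall a b : bool, (if a (+) b then 1 else 0 : 'F_2) =
    (if a then 1 else 0) + (if b then 1 else 0).
  case; case => /=; rewrite ?addr0 ?add0r //; exact: val_inj.
apply/rowP; elim/ord4P; rewrite !mxE /=;
by case: s => [[[a b] c] d]; case: t => [[[a' b'] c'] d'] /=.
Qed.

Lemma rowT_F : rowT F4 = 0.
Proof. apply/rowP; elim/ord4P; rewrite !mxE /=. all: by []. Qed.

Theorem lemma3p3 (D1 D2 : nat) :
  (1 < D1)%N -> (1 < D2)%N -> squarefree D1 -> squarefree D2 -> D1 <> D2 ->
  (3 <= sgnrk D1 D2)%N ->
  forall (D : nat) (w : Kelt),
    (1 < D)%N -> squarefree D ->
    emb D1 D2 0 w = sqrtC (D%:R : algC) ->
    exists eta : Kelt, is_OK_unit D1 D2 eta /\ sgn D1 D2 eta = sgn D1 D2 w.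
Proof.
move=> g1 g2 sf1 sf2 neq Hrk D w gD sD Hw.
have G : good D1 D2 by split.
have vin := w_sign D1 D2 D w G gD sD Hw.
have [Pv|nPv] := classic (Pu D1 D2 (sg D1 D2 w)).
  by case: Pv => eta [U E]; exists eta; split => //; rewrite !sgn_rowT E.
exfalso.
have [q Hq] := comb (Pu D1 D2) (sg D1 D2 w) vin (fun s t => PuX D1 D2 s t G)
  (fun s => Pu1 D1 D2 s G) (fun s => Pu2 D1 D2 s G) (fun s => Pu3 D1 D2 s G)
  (PuT D1 D2) nPv.
have sub : (<<enum (unit_sgn_group D1 D2)>> <= <<[:: rowT q; rowT T4]>>)%VS.
  apply/span_subvP => s; rewrite mem_enum inE /is_unit_sgn.
  case: excluded_middle_informative => // [[x [Ux Hx]]] _; rewrite -Hx.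
  rewrite sgn_rowT.
  have := Hq _ (ex_intro _ x (conj Ux erefl)).
  rewrite !inE => /orP[/eqP->|/orP[/eqP->|/orP[/eqP->|/eqP->]]].
  - by rewrite rowT_F mem0v.
  - by apply: memv_span; rewrite inE eqxx.
  - by apply: memv_span; rewrite !inE eqxx orbT.
  - by rewrite rowT_xor memvD // memv_span // !inE eqxx ?orbT.
have h1 := leq_trans Hrk (dimvS sub).
have h2 := dim_span [:: rowT q; rowT T4].
by have := leq_trans h1 h2.
Qed.
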